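(* Let $X$ be a d-space such that the preorder $\le$ on $X$ induced by $\vec\pi_1(X)$ (namely $x\le y$ iff there is a morphism $x\to y$ in $\vec\pi_1(X)$) is antisymmetric and makes $X$ a compact pospace. Let $X=X_0\supseteq X_1\supseteq\dots\supseteq X_n=A$ with functors $P_i:\vec\pi_1(X,X_{i-1})\to\vec\pi_1(X,X_i)$ be an extremal model of $X$ in which each $X_i$ ($1\le i\le n$) is compact. Then $\mathrm{Ext}(\vec\pi_1(X,A))=\mathrm{Ext}(X)$; that is, the extremal model induces an isomorphism (equality) of the fundamental bipartite graphs $\vec\pi_1(X,\mathrm{Ext}(X))$ and $\vec\pi_1(X,\mathrm{Ext}(\vec\pi_1(X,A)))$.
   Context: A d-space is a topological space $X$ with a set $dX$ of continuous paths $[0,1]\to X$ (dipaths) containing all constant paths, closed under precomposition with continuous non-decreasing maps $[0,1]\to[0,1]$, and closed under concatenation; subsets carry the dipaths with image in the subset. $\vec I$ is $[0,1]$ with all continuous non-decreasing paths as dipaths. The fundamental category $\vec\pi_1(X)$ has as objects the points of $X$ and as morphisms $a\to b$ the classes of dipaths from $a$ to $b$ under the equivalence relation generated by endpoint-fixing directed homotopies (dimaps $H:\vec I\times\vec I\to X$ with $H(t,0)=\gamma(t)$, $H(t,1)=\gamma'(t)$, $H(0,s)=a$, $H(1,s)=b$); composition is concatenation. For $A\subseteq X$, $\vec\pi_1(X,A)$ is the full subcategory on objects in $A$. A pospace is a topological space with a partial order $\le$ that is a closed subset of $X\times X$. For a category $\mathcal C$, $x\le y$ iff there is a morphism $x\to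 y$; minimal, maximal, extremal objects are defined with respect to this preorder ($a$ minimal iff $x\le a\Rightarrow x=a$; maximal iff $a\le x\Rightarrow x=a$); $\mathrm{Ext}(\mathcal C)$ is the set of extremal objects and $\mathrm{Ext}(X)=\mathrm{Ext}(\vec\pi_1(X))$. For $A\subseteq B\subseteq X$ with inclusion $\iota:\vec\pi_1(X,A)\to\vec\pi_1(X,B)$, a future retract is a functor $P:\vec\pi_1(X,B)\to\vec\pi_1(X,A)$ left adjoint to $\iota$ with unit $\eta_a=\mathrm{id}_a$ for $a\in A$; a past retract is a right adjoint $P$ of $\iota$ with counit $\varepsilon_a=\mathrm{id}_a$ for $a\in A$. An extremal model of $X$ is a chain $X=X_0\supseteq\dots\supseteq X_n=A$ with functors $P_i:\vec\pi_1(X,X_{i-1})\to\vec\pi_1(X,X_i)$, each a future or past retract, with $\mathrm{Ext}(X)\subseteq A$. *)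

(* Defs.v *)
From Stdlib Require Import Reals Lra List Relation_Operators.
Open Scope R_scope.
Set Implicit Arguments.

Record TopSpace := {
  pt :> Type;
  is_open : (pt -> Prop) -> Prop;
  open_full : is_open (fun _ => True);
  open_empty : is_open (fun _ => False);
  open_union : forall F : (pt -> Prop) -> Prop,
      (forall U, F U -> is_open U) -> is_open (fun x => exists U, F U /\ U x);
  open_inter : forall U V, is_open U -> is_open V -> is_open (fun x => U x /\ V x)
}.

Definition compact_sub {T : TopSpace} (K : T -> Prop) : Prop :=
  forall F : (T -> Prop) -> Prop,
    (forall U, F U -> is_open T U) ->
    (forall x, K x -> exists U, F U /\ U x) ->
    exists l : list (T -> Prop),
      (forall U, In U l -> F U) /\ (forall x, K x -> exists U, In U l /\ U x).

Definition closed_rel {T : TopSpace} (Rl : T -> T -> Prop) : Prop :=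
  forall x y, ~ Rl x y ->
    exists U V, is_open T U /\ is_open T V /\ U x /\ V y /\
      (forall x' y', U x' -> V y' -> ~ Rl x' y').

Definition I := { t : R | 0 <= t <= 1 }.
Definition ival (t : I) : R := proj1_sig t.

Lemma clamp_prf (x : R) : 0 <= Rmax 0 (Rmin 1 x) <= 1.
Proof.
  unfold Rmax, Rmin; destruct (Rle_dec 1 x); destruct (Rle_dec x 1);
  repeat match goal with |- context [Rle_dec ?a ?b] => destruct (Rle_dec a b) end; lra.
Qed.

Definition clamp (x : R) : I := exist _ (Rmax 0 (Rmin 1 x)) (clamp_prf x).
Definition I0 : I := clamp 0.
Definition I1 : I := clamp 1.

Definition cont_II (phi : I -> I) : Prop :=
  forall t e, 0 < e -> exists d, 0 < d /\
    forall t' : I, Rabs (ival t' - ival t) < d -> Rabs (ival (phi t') - ival (phi t)) < e.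
Definition nondecr (phi : I -> I) : Prop :=
  forall s t : I, ival s <= ival t -> ival (phi s) <= ival (phi t).

Definition cont_path {T : TopSpace} (p : I -> T) : Prop :=
  forall U, is_open T U -> forall t, U (p t) ->
    exists e, 0 < e /\ forall t' : I, Rabs (ival t' - ival t) < e -> U (p t').

Definition cont_sq {T : TopSpace} (H : I -> I -> T) : Prop :=
  forall U, is_open T U -> forall t s, U (H t s) ->
    exists e, 0 < e /\ forall t' s' : I,
      Rabs (ival t' - ival t) < e -> Rabs (ival s' - ival s) < e -> U (H t' s').

Definition concat (T : Type) (p q : I -> T) : I -> T :=
  fun t => if Rle_dec (ival t) (/2) then p (clamp (2 * ival t))
           else q (clamp (2 * ival t - 1)).

Definition cst (T : Type) (x : T) : I -> T := fun _ => x.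

Record DSpace := {
  dtop :> TopSpace;
  dpath : (I -> dtop) -> Prop;
  dpath_cont : forall p, dpath p -> @cont_path dtop p;
  dpath_const : forall x : dtop, dpath (cst x);
  dpath_reparam : forall p phi, dpath p -> cont_II phi -> nondecr phi ->
                    dpath (fun t => p (phi t));
  dpath_concat : forall p q, dpath p -> dpath q -> p I1 = q I0 -> dpath (concat p q)
}.

(** dimaps from ->I x ->I (product d-space: dipaths are pairs of
    continuous non-decreasing paths) *)
Definition dimap_sq {X : DSpace} (H : I -> I -> X) : Prop :=
  cont_sq H /\
  forall a b : I -> I, cont_II a -> nondecr a -> cont_II b -> nondecr b ->
    dpath X (fun t => H (a t) (b t)).

(** * The fundamental category ->pi_1(X)
    Morphisms a -> b are represented by dipaths from a to b; equality of
    morphisms is [mor_eq], the equivalence relation generated by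
    endpoint-fixing directed homotopy.  Composition is [concat]
    (diagrammatic order: [concat g d] is "g then d"). *)
Definition mor {X : DSpace} (a b : X) (g : I -> X) : Prop :=
  dpath X g /\ g I0 = a /\ g I1 = b.

Definition dihom {X : DSpace} (g g' : I -> X) : Prop :=
  exists H : I -> I -> X, dimap_sq H /\
    (forall t, H t I0 = g t) /\ (forall t, H t I1 = g' t) /\
    (forall s, H I0 s = g I0) /\ (forall s, H I1 s = g I1).

Definition mor_eq {X : DSpace} : (I -> X) -> (I -> X) -> Prop :=
  clos_refl_sym_trans _ (@dihom X).

(** Preorder of the full subcategory ->pi_1(X,S) *)
Definition le_in {X : DSpace} (S : X -> Prop) (x y : X) : Prop :=
  S x /\ S y /\ exists g, mor x y g.

Definition full (X : DSpace) : X -> Prop := fun _ => True.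

Definition is_minimal {X : DSpace} (S : X -> Prop) (a : X) : Prop :=
  S a /\ forall x, le_in S x a -> x = a.
Definition is_maximal {X : DSpace} (S : X -> Prop) (a : X) : Prop :=
  S a /\ forall x, le_in S a x -> x = a.
Definition Ext {X : DSpace} (S : X -> Prop) (a : X) : Prop :=
  is_minimal S a \/ is_maximal S a.

(** Functor ->pi_1(X,B) -> ->pi_1(X,A), given by an object map F0 and a
    (representative-level) morphism map F1 *)
Definition is_functor {X : DSpace} (B A : X -> Prop)
    (F0 : X -> X) (F1 : (I -> X) -> (I -> X)) : Prop :=
  (forall x, B x -> A (F0 x)) /\
  (forall x y g, B x -> B y -> mor x y g -> mor (F0 x) (F0 y) (F1 g)) /\
  (forall x y g d, B x -> B y -> mor x y g -> mor x y d -> mor_eq g d ->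
       mor_eq (F1 g) (F1 d)) /\
  (forall x, B x -> mor_eq (F1 (cst x)) (cst (F0 x))) /\
  (forall x y z g d, B x -> B y -> B z -> mor x y g -> mor y z d ->
       mor_eq (F1 (concat g d)) (concat (F1 g) (F1 d))).

(** Future retract: a functor P left adjoint to the inclusion, given by its
    unit eta (natural, universal), with eta_a = id_a for a in A. *)
Definition future_retract {X : DSpace} (B A : X -> Prop) : Prop :=
  exists (F0 : X -> X) (F1 : (I -> X) -> (I -> X)) (eta : X -> I -> X),
    is_functor B A F0 F1 /\
    (forall b, B b -> mor b (F0 b) (eta b)) /\
    (forall x y g, B x -> B y -> mor x y g ->
        mor_eq (concat (eta x) (F1 g)) (concat g (eta y))) /\
    (forall b a f, B b -> A a -> mor b a f ->
        exists g, mor (F0 b) a g /\ mor_eq (concat (eta b) g) f /\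
          forall g', mor (F0 b) a g' -> mor_eq (concat (eta b) g') f -> mor_eq g' g) /\
    (forall a, A a -> F0 a = a /\ mor_eq (eta a) (cst a)).

(** Past retract: a functor P right adjoint to the inclusion, given by its
    counit eps (natural, universal), with eps_a = id_a for a in A. *)
Definition past_retract {X : DSpace} (B A : X -> Prop) : Prop :=
  exists (F0 : X -> X) (F1 : (I -> X) -> (I -> X)) (eps : X -> I -> X),
    is_functor B A F0 F1 /\
    (forall b, B b -> mor (F0 b) b (eps b)) /\
    (forall x y g, B x -> B y -> mor x y g ->
        mor_eq (concat (F1 g) (eps y)) (concat (eps x) g)) /\
    (forall b a f, B b -> A a -> mor a b f ->
        exists g, mor a (F0 b) g /\ mor_eq (concat g (eps b)) f /\
          forall g', mor a (F0 b) g' -> mor_eq (concat g' (eps b)) f -> mor_eq g' g) /\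
    (forall a, A a -> F0 a = a /\ mor_eq (eps a) (cst a)).

(* Main.v *)
Require Import Defs.
From Stdlib Require Import Reals Lra List Classical ClassicalEpsilon FunctionalExtensionality PropExtensionality.

Definition sub {P : Type} (A B : P -> Prop) := forall x, A x -> B x.
Definition chainY {P : Type} (le : P -> P -> Prop) (y : P) (A : P -> Prop) :=
  (forall a, A a -> le a y) /\ (forall a b, A a -> A b -> le a b \/ le b a).
Definition addp {P : Type} (A : P -> Prop) (x : P) := fun z => A z \/ z = x.
Definition gx {P : Type} (le : P -> P -> Prop) (y : P) (A : P -> Prop) : P :=
  epsilon (inhabits y) (fun x => ~ A x /\ chainY le y (addp A x)).
Definition ghat {P : Type} (le : P -> P -> Prop) (y : P) (A : P -> Prop) : P -> Prop :=
  fun z => A z \/ (z = gx le y A /\ ~ A (gx le y A) /\ chainY le y (addp A (gx le y A))).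
Inductive Tw {P : Type} (le : P -> P -> Prop) (y : P) : (P -> Prop) -> Prop :=
| tw_succ : forall A, Tw le y A -> Tw le y (ghat le y A)
| tw_union : forall F : (P -> Prop) -> Prop, (forall A, F A -> Tw le y A) ->
    Tw le y (fun x => exists A, F A /\ A x).

Lemma set_ext {P : Type} (A B : P -> Prop) : sub A B -> sub B A -> A = B.
Proof.
  intros H1 H2; apply functional_extensionality; intro x;
  apply propositional_extensionality; split; auto.
Qed.

Section Z.
Context {P : Type} (le : P -> P -> Prop) (y : P).
Let G := ghat le y.
Let T := Tw le y.
Definition comparable (C : P -> Prop) := forall A, Tw le y A -> sub A C \/ sub C A.

Lemma ghat_incl A : sub A (ghat le y A).
Proof. intros x H; left; exact H. Qed.

Lemma ghat_one A C : sub A C -> (exists z, C z /\ ghat le y A z /\ ~ A z) -> sub (ghat le y A) C.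
Proof.
  intros HAC [z [Cz [Gz nAz]]] w [Aw | [-> _]]; auto.
  destruct Gz as [Az | [Ez _]]; [contradiction|]. subst z; exact Cz.
Qed.

Lemma step1 C : comparable C -> forall A, Tw le y A -> sub A C \/ sub (ghat le y C) A.
Proof.
  intros HC A HA; induction HA as [A' HA' IH | F HF IH].
  - destruct IH as [H1 | H1].
    + destruct (HC (ghat le y A') (tw_succ _ _ _ HA')) as [H2 | H2]; [left; exact H2|].
      destruct (classic (exists z, C z /\ ~ A' z)) as [[z [Cz nz]] | Hn].
      * left; apply ghat_one; auto. exists z; auto.
      * assert (E : C = A').
        { apply set_ext; auto. intros x Cx; apply NNPP; intro; apply Hn; eauto. }
        subst; right; intros x Hx; exact Hx.
    + right; intros x Hx; apply ghat_incl; auto.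
  - destruct (classic (exists B, F B /\ sub (ghat le y C) B)) as [[B [FB HB]] | Hn].
    + right; intros x Hx; exists B; auto.
    + left; intros x [B [FB Bx]]. destruct (IH B FB) as [H|H]; auto.
      exfalso; apply Hn; eauto.
Qed.

Lemma step2 C : Tw le y C -> comparable C.
Proof.
  intro HC; induction HC as [C' HC' IH | F HF IH]; intros A HA.
  - destruct (step1 C' IH A HA) as [H|H].
    + left; intros x Hx; apply ghat_incl; auto.
    + right; auto.
  - destruct (classic (forall B, F B -> sub B A)) as [Hall | Hn].
    + right; intros x [B [FB Bx]]; eapply Hall; eauto.
    + apply not_all_ex_not in Hn; destruct Hn as [B HB].
      apply imply_to_and in HB; destruct HB as [FB nsub].
      destruct (IH B FB A HA) as [H|H]; [|contradiction].
      left; intros x Ax; exists B; auto.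
Qed.

Lemma chain_sub A B : sub A B -> chainY le y B -> chainY le y A.
Proof. intros H [H1 H2]; split; auto. Qed.

Lemma tw_chain C : Tw le y C -> chainY le y C.
Proof.
  intro HC; induction HC as [A HA IH | F HF IH].
  - destruct (classic (~ A (gx le y A) /\ chainY le y (addp A (gx le y A)))) as [[n c]|n].
    + apply chain_sub with (addp A (gx le y A)); auto.
      intros w [Aw | [E _]]; [left; auto | right; auto].
    + apply chain_sub with A; auto.
      intros w [Aw | [E [n1 c1]]]; auto. exfalso; tauto.
  - split.
    + intros a [B [FB Ba]]; apply (proj1 (IH B FB)); auto.
    + intros a b [B1 [F1 Ba]] [B2 [F2 Bb]].
      destruct (step2 B1 (HF B1 F1) B2 (HF B2 F2)) as [H|H].
      * apply (proj2 (IH B1 F1)); auto.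
      * apply (proj2 (IH B2 F2)); auto.
Qed.
End Z.

Lemma zorn_min (P : Type) (le : P -> P -> Prop)
  (refl : forall x, le x x) (trans : forall x y z, le x y -> le y z -> le x z)
  (anti : forall x y, le x y -> le y x -> x = y)
  (lb : forall C : P -> Prop, (exists c, C c) ->
        (forall a b, C a -> C b -> le a b \/ le b a) -> exists b, forall c, C c -> le b c)
  (y : P) : exists m, le m y /\ forall z, le z m -> z = m.
Proof.
  set (U := fun x => exists A, Tw le y A /\ A x).
  assert (HU : Tw le y U) by (apply tw_union; auto).
  assert (Hsub : sub (ghat le y U) U).
  { intros w Hw; exists (ghat le y U); split; auto; apply tw_succ; auto. }
  assert (Hmax : forall x, ~ U x -> chainY le y (addp U x) -> False).
  { intros x nx cx.
    pose proof (epsilon_spec (inhabits y) (fun x => ~ U x /\ chainY le y (addp U x))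
                  (ex_intro _ x (conj nx cx))) as [n0 c0].
    apply n0; apply Hsub; right; split; [reflexivity | split; assumption]. }
  pose proof (tw_chain le y U HU) as [Cy Cc].
  assert (Uy : U y).
  { apply NNPP; intro n; apply (Hmax y n); split.
    - intros a [Ua | ->]; auto.
    - intros a b [Ua | ->] [Ub | ->]; auto. }
  destruct (lb U (ex_intro _ y Uy) Cc) as [b Hb].
  assert (Ub : U b).
  { apply NNPP; intro n; apply (Hmax b n); split.
    - intros a [Ua | ->]; auto.
    - intros a c [Ua | ->] [Uc | ->]; auto. }
  exists b; split; auto.
  intros z Hz.
  assert (Uz : U z).
  { apply NNPP; intro n; apply (Hmax z n); split.
    - intros a [Ua | ->]; eauto.
    - intros a c [Ua | ->] [Uc | ->]; eauto. }
  apply anti; auto.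
Qed.
Lemma ival_I0 : ival I0 = 0.
Proof. unfold I0, ival, clamp; simpl; unfold Rmax, Rmin;
  repeat match goal with |- context [Rle_dec ?a ?b] => destruct (Rle_dec a b) | H : context [Rle_dec ?a ?b] |- _ => destruct (Rle_dec a b) end; lra. Qed.
Lemma ival_I1 : ival I1 = 1.
Proof. unfold I1, ival, clamp; simpl; unfold Rmax, Rmin;
  repeat match goal with |- context [Rle_dec ?a ?b] => destruct (Rle_dec a b) | H : context [Rle_dec ?a ?b] |- _ => destruct (Rle_dec a b) end; lra. Qed.

Lemma le_refl (X : DSpace) (x : X) : le_in (@full X) x x.
Proof. split; [exact Logic.I|split; [exact Logic.I|]]. exists (cst x); split; [apply dpath_const| split; reflexivity]. Qed.

Lemma le_trans (X : DSpace) (x y z : X) : le_in (@full X) x y -> le_in (@full X) y z -> le_in (@full X) x z.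
Proof.
  intros [_ [_ [p [dp [p0 p1]]]]] [_ [_ [q [dq [q0 q1]]]]].
  split; [exact Logic.I|split; [exact Logic.I|]]. exists (Defs.concat p q); split; [apply dpath_concat; congruence|].
  unfold Defs.concat; split.
  - destruct (Rle_dec (ival I0) (/2)) as [h|h]; [|rewrite ival_I0 in h; lra].
    rewrite ival_I0. replace (2 * 0) with 0 by lra. exact p0.
  - destruct (Rle_dec (ival I1) (/2)) as [h|h]; [rewrite ival_I1 in h; lra|].
    rewrite ival_I1. replace (2 * 1 - 1) with 1 by lra. exact q1.
Qed.

Lemma fin_min (X : DSpace) (Rl : X -> X -> Prop) (C : X -> Prop) (c0 : X) (Cc0 : C c0)
  (Rtrans : forall a b c, Rl a b -> Rl b c -> Rl a c)
  (Rrefl : forall a, Rl a a)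
  (Cch : forall a b, C a -> C b -> Rl a b \/ Rl b a)
  (l : list (X -> Prop))
  (Hl : forall U, In U l -> exists c, C c /\ (forall x', U x' -> ~ Rl x' c)) :
  exists m, C m /\ forall U, In U l -> exists c, C c /\ (forall x', U x' -> ~ Rl x' c) /\ Rl m c.
Proof.
  induction l as [|U l IH].
  - exists c0; split; auto; intros U [].
  - destruct IH as [m [Cm Hm]]; [intros; apply Hl; right; auto|].
    destruct (Hl U (or_introl eq_refl)) as [c [Cc Hc]].
    destruct (Cch m c Cm Cc) as [h|h].
    + exists m; split; auto. intros V [<-|HV]; [exists c; auto|apply Hm; auto].
    + exists c; split; auto. intros V [<-|HV]; [exists c; auto|].
      destruct (Hm V HV) as [c' [? [? ?]]]; exists c'; split; [|split]; eauto.
Qed.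

Lemma chain_bound (X : DSpace) (Rl : X -> X -> Prop)
  (Rtrans : forall a b c, Rl a b -> Rl b c -> Rl a c)
  (Rrefl : forall a, Rl a a)
  (Hcomp : compact_sub (@full X))
  (Hcl : forall z c, ~ Rl z c -> exists U, is_open X U /\ U z /\ forall x', U x' -> ~ Rl x' c)
  (C : X -> Prop) : (exists c, C c) -> (forall a b, C a -> C b -> Rl a b \/ Rl b a) ->
  exists b, forall c, C c -> Rl b c.
Proof.
  intros [c0 Cc0] Cch. apply NNPP; intro Hn.
  set (F := fun U : X -> Prop => is_open X U /\ exists c, C c /\ (forall x', U x' -> ~ Rl x' c)).
  destruct (Hcomp F) as [l [Hl Hcov]].
  - intros U [h _]; exact h.
  - intros z _. assert (exists c, C c /\ ~ Rl z c) as [c [Cc nz]].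
    { apply NNPP; intro H2; apply Hn; exists z; intros c Cc; apply NNPP; intro; apply H2; eauto. }
    destruct (Hcl z c nz) as [U [oU [Uz HU]]]. exists U; split; auto. split; eauto.
  - destruct (fin_min X Rl C c0 Cc0 Rtrans Rrefl Cch l) as [m [Cm Hm]].
    { intros U HU; apply (proj2 (Hl U HU)). }
    destruct (Hcov m Logic.I) as [U [HU Um]].
    destruct (Hm U HU) as [c [_ [Hc Hmc]]]. exact (Hc m Um Hmc).
Qed.

Theorem theorem3p2 (X : DSpace)
  (Hanti : forall x y : X, le_in (@full X) x y -> le_in (@full X) y x -> x = y)
  (Hcomp : compact_sub (@full X))
  (Hclosed : closed_rel (le_in (@full X)))
  (n : nat) (Xs : nat -> X -> Prop)
  (HX0 : forall x, Xs 0%nat x)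
  (Hsub : forall i, (1 <= i <= n)%nat -> forall x, Xs i x -> Xs (i - 1)%nat x)
  (Hret : forall i, (1 <= i <= n)%nat ->
            future_retract (Xs (i - 1)%nat) (Xs i) \/ past_retract (Xs (i - 1)%nat) (Xs i))
  (Hext : forall x, Ext (@full X) x -> Xs n x)
  (Hcpt : forall i, (1 <= i <= n)%nat -> compact_sub (Xs i)) :
  forall x : X, Ext (Xs n) x <-> Ext (@full X) x.
Proof.
  set (le := le_in (@full X)).
  assert (Hmin : forall y : X, exists m, le m y /\ forall z, le z m -> z = m).
  { apply zorn_min; [apply le_refl | apply le_trans | exact Hanti |].
    apply chain_bound; [apply le_trans | apply le_refl | exact Hcomp |].
    intros z c nz. destruct (Hclosed z c nz) as [U [V [oU [oV [Uz [Vc H]]]]]].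
    exists U; split; [|split]; auto. }
  assert (Hmax : forall y : X, exists m, le y m /\ forall z, le m z -> z = m).
  { apply (zorn_min X (fun a b => le b a)).
    - intros; apply le_refl.
    - intros a b c h1 h2; exact (le_trans X c b a h2 h1).
    - intros a b h1 h2; apply Hanti; auto.
    - apply (chain_bound X (fun a b => le b a)).
      + intros a b c h1 h2; exact (le_trans X c b a h2 h1).
      + intros; apply le_refl.
      + exact Hcomp.
      + intros z c nz. destruct (Hclosed c z nz) as [U [V [oU [oV [Uc [Vz H]]]]]].
        exists V; split; [|split]; auto. }
  intro x; split.
  - intros [[Ax Hx] | [Ax Hx]].
    + left; split; [exact Logic.I|]. intros z Hz.
      destruct (Hmin z) as [m [mz Hm]].
      assert (Em : Ext (@full X) m).
      { left; split; [exact Logic.I|]. intros w Hw. apply Hm; exact Hw. }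
      assert (mx : m = x).
      { apply Hx. destruct (le_trans X m z x mz Hz) as [_ [_ g]].
        split; [apply Hext; auto | split; auto]. }
      subst m. apply Hanti; auto.
    + right; split; [exact Logic.I|]. intros z Hz.
      destruct (Hmax z) as [m [mz Hm]].
      assert (Em : Ext (@full X) m).
      { right; split; [exact Logic.I|]. intros w Hw. apply Hm; exact Hw. }
      assert (mx : m = x).
      { apply Hx. destruct (le_trans X x z m Hz mz) as [_ [_ g]].
        split; [auto | split; [apply Hext; auto | auto]]. }
      subst m. symmetry; apply Hanti; auto.
  - intros HE. pose proof (Hext x HE) as Ax.
    destruct HE as [[_ Hx] | [_ Hx]].
    + left; split; auto. intros z [_ [_ g]]. apply Hx; split; [exact Logic.I|split; [exact Logic.I|exact g]].
    + right; split; auto. intros z [_ [_ g]]. apply Hx; split; [exact Logic.I|split; [exact Logic.I|exact g]].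
Qed.
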